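(* For each positive integer $k$ and each $n\in\mathbb{Z}$, $$f(n-k, x, q^k s) = \frac{1}{v(k)} \big(f(k-1, x, qs) f(n, x, s) - f(k, x, s) f(n-1, x, qs)\big),\qquad v(k) = (-1)^k q^{\binom{k}{2}} s^{k-1}.$$
   Context: Let $x,s,q$ be indeterminates; all quantities live in the field of rational functions in $x,s,q$. The Carlitz $q$-Fibonacci polynomials $f(n,x,s)$ are defined by $f(0,x,s)=0$, $f(1,x,s)=1$ and $f(n, x, s) = x f(n-1, x, s) + q^{n-2} s f(n-2, x, s)$; this recurrence is required to hold for all $n\in\mathbb{Z}$, which uniquely extends $f(n,x,s)$ to negative $n$. Here $f(n,x,q^a s)$ means $f(n,x,s)$ with $s$ replaced by $q^a s$. *)

(* Defs.v *)
From HB Require Import structures.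
From mathcomp Require Import all_boot all_order all_algebra.
Set Implicit Arguments. Unset Strict Implicit. Unset Printing Implicit Defensive.
Import Order.TTheory GRing.Theory Num.Theory.
Local Open Scope ring_scope.

(* The field Q(x, s, q) of rational functions in three indeterminates,
   built as the fraction field of Q[q][s][x]. *)
Definition Kxsq : fieldType := {fraction {poly {poly {poly rat}}}}.

Definition xx : Kxsq := tofrac ('X : {poly {poly {poly rat}}}).
Definition ss : Kxsq := tofrac (('X : {poly {poly rat}})%:P : {poly {poly {poly rat}}}).
Definition qq : Kxsq := tofrac ((('X : {poly rat})%:P)%:P : {poly {poly {poly rat}}}).

Section CarlitzFib.
Variables (F : fieldType) (x s q : F).

(* fnat n = (f n, f (n+1)) for n >= 0, via f(n+2) = x f(n+1) + q^n s f(n). *)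
Fixpoint fnat (n : nat) : F * F :=
  match n with
  | 0%N => (0, 1)
  | m.+1 => let: (a, b) := fnat m in (b, x * b + q ^+ m * s * a)
  end.

(* fneg m = (f(-m), f(-m+1)) for m >= 0, via the recurrence at index -m+1:
   f(-m+1) = x f(-m) + q^(-m-1) s f(-m-1), i.e. exponent (-m+1)-2. *)
Fixpoint fneg (m : nat) : F * F :=
  match m with
  | 0%N => (0, 1)
  | m'.+1 => let: (a, b) := fneg m' in
             ((b - x * a) / (q ^ (- (m'%:Z) - 1) * s), a)
  end.

Definition cfib (n : int) : F :=
  match n with
  | Posz k => (fnat k).1
  | Negz k => (fneg k.+1).1
  end.

End CarlitzFib.

Definition f (n : int) (x s : Kxsq) : Kxsq := cfib x s qq n.

(* Main.v *)
Require Import Defs.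
From HB Require Import structures.
From mathcomp Require Import all_boot all_order all_algebra.
From mathcomp Require Import ring zify.
Import Order.TTheory GRing.Theory Num.Theory.
Local Open Scope ring_scope.

Section Gen.
Variables (F : fieldType) (x q : F).
Hypothesis q0 : q != 0.

Lemma fnat_rec s m : (fnat x s q m.+2).1 =
  x * (fnat x s q m.+1).1 + q ^+ m * s * (fnat x s q m).1.
Proof. rewrite /=. by case: (fnat x s q m). Qed.

Lemma gposrec s m : cfib x s q (Posz m.+2) =
  x * cfib x s q (Posz m.+1) + q ^+ m * s * cfib x s q (Posz m).
Proof. exact: fnat_rec. Qed.

Lemma gneg s m : cfib x s q (- m%:Z) = (fneg x s q m).1.
Proof. by case: m. Qed.

Lemma gneg2 s m : cfib x s q (- m%:Z + 1) = (fneg x s q m).2.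
Proof.
case: m => [|m]; first by [].
have -> : - (m.+1)%:Z + 1 = - m%:Z by lia.
rewrite gneg /=. by case: (fneg x s q m).
Qed.

Lemma fneg_rec s m : s != 0 -> (fneg x s q m.+1).1 * (q ^ (- (m%:Z) - 1) * s)
  = (fneg x s q m).2 - x * (fneg x s q m).1.
Proof.
move=> s0; rewrite /=; case: (fneg x s q m) => a b /=.
by rewrite mulfVK // mulf_neq0 // expfz_neq0.
Qed.

Lemma grec s n : s != 0 -> cfib x s q (n + 2) =
  x * cfib x s q (n + 1) + q ^ n * s * cfib x s q n.
Proof.
move=> s0; case: n => m.
  rewrite -!PoszD !addn2 addn1; exact: gposrec.
rewrite NegzE.
have -> : - (m.+1)%:Z + 2 = - m%:Z + 1 by lia.
have -> : - (m.+1)%:Z + 1 = - m%:Z by lia.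
rewrite gneg2 gneg gneg.
have -> : - (m.+1)%:Z = - m%:Z - 1 by lia.
have h := fneg_rec s m s0.
rewrite -(subrK (x * (fneg x s q m).1) (fneg x s q m).2) -h; ring.
Qed.

Lemma Eid s j :
  let A n := cfib x s q (Posz n) in let B n := cfib x (q * s) q (Posz n) in
  A j.+1 * B j.+1 - A j.+2 * B j = (-1) ^+ j * q ^+ 'C(j.+1, 2) * s ^+ j.
Proof.
move=> A B; elim: j => [|j IH].
  rewrite /A /B /=. ring.
rewrite /A /B (gposrec s j.+1) (gposrec (q * s) j).
transitivity (- (q ^+ j.+1 * s) * (A j.+1 * B j.+1 - A j.+2 * B j)).
  rewrite /A /B (gposrec s j). rewrite exprS. ring.
rewrite IH (binS j.+1 1) bin1 exprD !(exprS _ j); ring.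
Qed.

End Gen.

Lemma rec_uniq (F : fieldType) (x : F) (c u : int -> F)
  (c0 : forall n, c n != 0)
  (hu : forall n, u (n + 2) = x * u (n + 1) + c n * u n) m :
  u m = 0 -> u (m + 1) = 0 -> forall n, u n = 0.
Proof.
move=> h0 h1.
have up : forall j : nat, u (m + j%:Z) = 0 /\ u (m + j%:Z + 1) = 0.
  elim=> [|j [e1 e2]]; first by rewrite addr0.
  have -> : m + (j.+1)%:Z = m + j%:Z + 1 by lia.
  split => //.
  have -> : m + j%:Z + 1 + 1 = (m + j%:Z) + 2 by lia.
  by rewrite hu e1 e2 !mulr0 addr0.
have down : forall j : nat, u (m - j%:Z) = 0 /\ u (m - j%:Z + 1) = 0.
  elim=> [|j [e1 e2]]; first by rewrite subr0.
  have e3 : m - (j.+1)%:Z + 1 = m - j%:Z by lia.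
  rewrite e3; split => //.
  have := hu (m - (j.+1)%:Z).
  have -> : m - (j.+1)%:Z + 2 = m - j%:Z + 1 by lia.
  rewrite e3 e1 e2 mulr0 add0r => /esym /eqP.
  by rewrite mulf_eq0 (negbTE (c0 _)) => /eqP.
move=> n; have -> : n = m + (n - m) by lia.
move: (n - m) => d; case: d => j.
  by case: (up j).
rewrite NegzE; by case: (down j.+1).
Qed.

Theorem corollary2 (k : nat) (n : int) : (0 < k)%N ->
  f (n - k%:Z) xx (qq ^+ k * ss) =
  (f (k%:Z - 1) xx (qq * ss) * f n xx ss - f k%:Z xx ss * f (n - 1) xx (qq * ss))
  / ((-1) ^+ k * qq ^+ 'C(k, 2) * ss ^+ k.-1).
Proof.
move=> k0.
have q0 : qq != 0 by rewrite /qq tofrac_eq0 !polyC_eq0 polyX_eq0.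
have s0 : ss != 0 by rewrite /ss tofrac_eq0 !polyC_eq0 polyX_eq0.
set v := ((-1) ^+ k * qq ^+ 'C(k, 2) * ss ^+ k.-1).
have m1 : (-1 : Kxsq) != 0 by rewrite oppr_eq0 oner_eq0.
have v0 : v != 0 := mulf_neq0 (mulf_neq0 (expf_neq0 k m1) (expf_neq0 _ q0)) (expf_neq0 _ s0).
apply: (canRL (mulfK v0)).
apply/eqP; rewrite -subr_eq0; apply/eqP.
pose u := fun n : int => f (n - k%:Z) xx (qq ^+ k * ss) * v -
  (f (k%:Z - 1) xx (qq * ss) * f n xx ss - f k%:Z xx ss * f (n - 1) xx (qq * ss)).
suff : forall n, u n = 0 by move/(_ n).
apply: (@rec_uniq Kxsq xx (fun n => qq ^ n * ss) u _ _ k%:Z).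
- by move=> m; apply: mulf_neq0 (expfz_neq0 _ q0) s0.
- move=> m; rewrite /u /f.
  have sk0 : qq ^+ k * ss != 0 := mulf_neq0 (expf_neq0 _ q0) s0.
  have sq0 : qq * ss != 0 := mulf_neq0 q0 s0.
  have hL := @grec _ xx _ q0 _ (m - k%:Z) sk0.
  have e1 : qq ^ (m - k%:Z) * qq ^+ k = qq ^ m.
    by rewrite -[qq ^+ k]/(qq ^ (k%:Z)) -(expfzDr _ _ q0) subrK.
  rewrite mulrA e1 in hL.
  have hB := @grec _ xx _ q0 _ (m - 1) sq0.
  have e2 : qq ^ (m - 1) * qq = qq ^ m.
    by rewrite -[X in _ * X = _]expr1z -(expfzDr _ _ q0) subrK.
  rewrite mulrA e2 in hB.
  have hA := @grec _ xx _ q0 _ m s0.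
  have -> : m + 2 - k%:Z = m - k%:Z + 2 by lia.
  have -> : m + 1 - k%:Z = m - k%:Z + 1 by lia.
  have -> : m + 2 - 1 = m - 1 + 2 by lia.
  have -> : m + 1 - 1 = m - 1 + 1 by lia.
  rewrite hL hB hA.
  have -> : m - 1 + 1 = m by lia.
  ring.
- rewrite /u /f subrr.
  have -> : cfib xx (qq ^+ k * ss) qq 0 = 0 by [].
  ring.
- rewrite /u /f.
  have -> : k%:Z + 1 - k%:Z = 1 by lia.
  rewrite /v; clear u v0; clear v.
  case: k k0 => [//|j] _.
  have -> : (j.+1)%:Z - 1 = j%:Z by lia.
  have -> : (j.+1)%:Z + 1 - 1 = (j.+1)%:Z by lia.
  have -> : (j.+1)%:Z + 1 = (j.+2)%:Z by lia.
  have E := @Eid _ xx qq ss j; cbv zeta in E.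
  have -> : cfib xx (qq ^+ j.+1 * ss) qq 1 = 1 by [].
  have -> : (j.+1).-1 = j by [].
  have -> : (-1 : Kxsq) ^+ j.+1 * qq ^+ 'C(j.+1, 2) * ss ^+ j = - ((-1) ^+ j * qq ^+ 'C(j.+1, 2) * ss ^+ j).
    by rewrite (exprS (-1 : Kxsq) j) !mulN1r !mulNr.
  rewrite -E.
  ring.
Qed.
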